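(* Let $(X,\mathcal{E})$ be a ballean and $Y\subseteq X$ an unbounded subset. If $(X,\mathcal{E})$ is maximal (respectively, extremely normal, ultranormal), then the subballean $(Y,\mathcal{E}_Y)$ is maximal (respectively, extremely normal, ultranormal).
   Context: A ballean $(X,\mathcal{E})$ is a set with a coarse structure. $E[x]=\{y:(x,y)\in E\}$, $E[A]=\bigcup_{a\in A}E[a]$. $Y$ is bounded if $Y\subseteq E[x]$ for some $x$ and $E\in\mathcal{E}$. The subballean on $Y$ has coarse structure $\mathcal{E}_Y=\{E\cap(Y\times Y):E\in\mathcal{E}\}$. $A$ is large if $X=E[A]$ for some $E$. Subsets $A,B$ are asymptotically disjoint if $E[A]\cap E[B]$ is bounded for every $E$. An unbounded ballean is maximal if $X$ is bounded in every coarse structure strictly containing $\mathcal{E}$; extremely normal if every unbounded subset is large; ultranormal if no two unbounded subsets are asymptotically disjoint. *)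

(* Defs.v *)
Set Implicit Arguments.

Definition rel (X : Type) := X -> X -> Prop.

(* A coarse structure on X: a family of entourages (relations on X) that
   contains the diagonal, is closed under subsets, finite unions, inverses
   and composition, and (Protasov's standing convention) is connected. *)
Record is_coarse (X : Type) (E : rel X -> Prop) : Prop := {
  cs_diag : E (fun x y => x = y);
  cs_sub : forall F G : rel X, E F -> (forall x y, G x y -> F x y) -> E G;
  cs_union : forall F G : rel X, E F -> E G -> E (fun x y => F x y \/ G x y);
  cs_inv : forall F : rel X, E F -> E (fun x y => F y x);
  cs_comp : forall F G : rel X, E F -> E G ->
              E (fun x z => exists y, F x y /\ G y z);
  cs_conn : forall x y : X, exists F, E F /\ F x y
}.

Definition image (X : Type) (F : rel X) (A : X -> Prop) : X -> Prop :=
  fun z => exists a, A a /\ F a z.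

Definition bounded (X : Type) (E : rel X -> Prop) (A : X -> Prop) : Prop :=
  exists (x : X) (F : rel X), E F /\ forall y, A y -> F x y.

Definition unbounded_ballean (X : Type) (E : rel X -> Prop) : Prop :=
  ~ bounded E (fun _ => True).

Definition large (X : Type) (E : rel X -> Prop) (A : X -> Prop) : Prop :=
  exists F, E F /\ forall x, image F A x.

Definition asymp_disjoint (X : Type) (E : rel X -> Prop) (A B : X -> Prop) : Prop :=
  forall F, E F -> bounded E (fun z => image F A z /\ image F B z).

Definition maximal (X : Type) (E : rel X -> Prop) : Prop :=
  unbounded_ballean E /\
  forall E' : rel X -> Prop, is_coarse E' ->
    (forall F, E F -> E' F) -> (exists F, E' F /\ ~ E F) ->
    bounded E' (fun _ => True).

Definition extremely_normal (X : Type) (E : rel X -> Prop) : Prop :=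
  unbounded_ballean E /\ forall A, ~ bounded E A -> large E A.

Definition ultranormal (X : Type) (E : rel X -> Prop) : Prop :=
  unbounded_ballean E /\
  forall A B, ~ bounded E A -> ~ bounded E B -> ~ asymp_disjoint E A B.

Definition subcoarse (X : Type) (E : rel X -> Prop) (Y : X -> Prop)
  : rel {x : X | Y x} -> Prop :=
  fun F => exists G, E G /\
    forall a b : {x : X | Y x}, F a b <-> G (proj1_sig a) (proj1_sig b).

(* Main.v *)
Require Import Defs.
From Stdlib Require Import ProofIrrelevance Classical.
Set Implicit Arguments.

Definition iota {X:Type} {Y:X->Prop} (A : {x|Y x} -> Prop) : X -> Prop :=
  fun y => exists b, A b /\ proj1_sig b = y.

Lemma sig_inj X (Y:X->Prop) (a b : {x|Y x}) : proj1_sig a = proj1_sig b -> a = b.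
Proof. destruct a as [x p], b as [y q]; simpl; intros ->. f_equal. apply proof_irrelevance. Qed.

Lemma restr_in X (E:rel X->Prop) Y (G:rel X) : E G ->
  subcoarse E Y (fun a b => G (proj1_sig a) (proj1_sig b)).
Proof. intros HG; exists G; split; [exact HG| tauto]. Qed.

Lemma bS_to_E X (E : rel X -> Prop) (Y : X -> Prop) (A : {x|Y x} -> Prop) : bounded (subcoarse E Y) A -> bounded E (iota A).
Proof.
  intros [a0 [F [[G [HG HFG]] HA]]].
  exists (proj1_sig a0), G; split; auto.
  intros y [b [Hb <-]]. apply HFG. auto.
Qed.

Lemma bE_to_S X (E : rel X -> Prop) Y (hE : is_coarse E) (y0 : {x|Y x}) (A : {x|Y x} -> Prop) :
  bounded E (iota A) -> bounded (subcoarse E Y) A.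
Proof.
  intros [x [G [HG HA]]].
  destruct (cs_conn hE (proj1_sig y0) x) as [H [HH Hxy]].
  exists y0, (fun a b => (fun u v => exists z, H u z /\ G z v) (proj1_sig a) (proj1_sig b)).
  split.
  - exists (fun u v => exists z, H u z /\ G z v); split; [apply (cs_comp hE); auto| tauto].
  - intros b Hb. exists x. split; auto. apply HA. exists b; auto.
Qed.

Lemma bounded_mono X (E : rel X -> Prop) (A B : X -> Prop) :
  bounded E A -> (forall y, B y -> A y) -> bounded E B.
Proof. intros [x [F [HF H]]] HBA. exists x, F; split; auto. Qed.

Lemma unb X (E : rel X -> Prop) (Y : X -> Prop) : ~ bounded E Y -> unbounded_ballean (subcoarse E Y).
Proof.
  intros hY Hb. apply hY. eapply bounded_mono; [exact (bS_to_E Hb)|].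
  intros y Hy. exists (exist _ y Hy). auto.
Qed.

Definition ext X (E : rel X -> Prop) (Y : X -> Prop) (E' : rel {x|Y x} -> Prop) :=
  fun G : rel X => exists H K, E H /\ E' K /\ forall x y, G x y -> H x y \/
     exists a b : {x|Y x}, H x (proj1_sig a) /\ K a b /\ H (proj1_sig b) y.

Lemma ext_coarse X (E : rel X -> Prop) (Y : X -> Prop) (hE : is_coarse E) (E' : rel {x|Y x} -> Prop) (hE' : is_coarse E')
  (Hsub : forall F, subcoarse E Y F -> E' F) : is_coarse (ext E Y E').
Proof.
  constructor.
  - exists (fun x y => x = y), (fun a b => a = b). split; [apply (cs_diag hE)|].
    split; [apply (cs_diag hE')|]. auto.
  - intros F G [H [K [h [k c]]]] s. exists H, K. split; auto.
  - intros F G [H1 [K1 [h1 [k1 c1]]]] [H2 [K2 [h2 [k2 c2]]]].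
    exists (fun x y => H1 x y \/ H2 x y), (fun a b => K1 a b \/ K2 a b).
    split; [apply (cs_union hE); auto|]. split; [apply (cs_union hE'); auto|].
    intros x y [f|g].
    + destruct (c1 _ _ f) as [h|[a [b [p [q r]]]]]; [left; auto|right; exists a, b; auto].
    + destruct (c2 _ _ g) as [h|[a [b [p [q r]]]]]; [left; auto|right; exists a, b; auto].
  - intros F [H [K [h [k c]]]]. exists (fun x y => H y x), (fun a b => K b a).
    split; [apply (cs_inv hE); auto|]. split; [apply (cs_inv hE'); auto|].
    intros x y Fyx. destruct (c _ _ Fyx) as [h'|[a [b [p [q r]]]]]; [left; auto|right; exists b, a; auto].
  - intros F G [H1 [K1 [h1 [k1 c1]]]] [H2 [K2 [h2 [k2 c2]]]].
    assert (hR : E' (fun b c => (fun u v => exists w, H1 u w /\ H2 w v) (proj1_sig b) (proj1_sig c))).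
    { apply Hsub. exists (fun u v => exists w, H1 u w /\ H2 w v); split; [apply (cs_comp hE); auto| tauto]. }
    exists (fun x y => H1 x y \/ H2 x y \/ exists z, H1 x z /\ H2 z y),
      (fun a d => K1 a d \/ K2 a d \/ exists b c, K1 a b /\
          (exists w, H1 (proj1_sig b) w /\ H2 w (proj1_sig c)) /\ K2 c d).
    split.
    { apply (cs_union hE); auto. apply (cs_union hE); auto. apply (cs_comp hE); auto. }
    split.
    { apply (cs_sub hE' _ _ (cs_union hE' _ _ k1 (cs_union hE' _ _ k2
         (cs_comp hE' _ _ (cs_comp hE' _ _ k1 hR) k2)))).
      intros a d [q|[q|[b [c [q1 [q2 q3]]]]]]; auto.
      right; right. exists c. split; auto. exists b; auto. }
    intros x y [w [f g]].
    destruct (c1 _ _ f) as [p1|[a [b [p [q r]]]]];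
    destruct (c2 _ _ g) as [p2|[a' [b' [p' [q' r']]]]].
    + left; right; right; exists w; auto.
    + right; exists a', b'. split; [right; right; exists w; auto|]. split; auto.
    + right; exists a, b. split; [left; auto|]. split; [left; auto|].
      right; right; exists w; auto.
    + right; exists a, b'. split; [left; auto|]. split; [|right; left; auto].
      right; right. exists b, a'. split; auto. split; auto. exists w; auto.
  - intros x y. destruct (cs_conn hE x y) as [H [HH Hxy]].
    exists H. split; auto. exists H, (fun a b => a = b). split; auto.
    split; [apply (cs_diag hE')|]. auto.
Qed.

Theorem proposition4 (X : Type) (E : rel X -> Prop) (Y : X -> Prop)
  (hE : is_coarse E) (hY : ~ bounded E Y) :
  (maximal E -> maximal (subcoarse E Y)) /\
  (extremely_normal E -> extremely_normal (subcoarse E Y)) /\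
  (ultranormal E -> ultranormal (subcoarse E Y)).
Proof.
  split; [|split].
  - intros [_ HM]. split; [apply unb; auto|].
    intros E' hE' Hsub [F0 [HF0 HnF0]].
    destruct (classic (exists y0 : {x|Y x}, True)) as [[y0 _]|Hne].
    2:{ exfalso; apply HnF0. exists (fun x y => x = y); split; [apply (cs_diag hE)|].
        intros a; exfalso; apply Hne; eauto. }
    pose (F'' := fun x y => exists a b : {x|Y x}, proj1_sig a = x /\ proj1_sig b = y /\ F0 a b).
    destruct (HM (ext E Y E') (ext_coarse hE hE' Hsub)) as [x0 [G [[H [K [HH [HK Hc]]]] HG]]].
    + intros G HG. exists G, (fun a b => a = b). split; auto. split; [apply (cs_diag hE')|]. auto.
    + exists F''. split.
      * exists (fun x y => x = y), F0. split; [apply (cs_diag hE)|]. split; auto.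
        intros x y [a [b [ea [eb f]]]]. right. exists a, b. auto.
      * intro h. apply HnF0. exists F''. split; auto. intros a b; split.
        { intro; exists a, b; auto. }
        { intros [a' [b' [ea [eb f]]]]. apply sig_inj in ea; apply sig_inj in eb. subst. auto. }
    + destruct (cs_conn hE (proj1_sig y0) x0) as [C [HC Cyx]].
      pose (R := fun a b : {x|Y x} => (fun u v => (exists z, C u z /\ H z v) \/ H u v)
                   (proj1_sig a) (proj1_sig b)).
      assert (hR : E' R).
      { apply Hsub. exists (fun u v => (exists z, C u z /\ H z v) \/ H u v); split; [|intros; unfold R; tauto].
        apply (cs_union hE); auto. apply (cs_comp hE); auto. }
      exists y0, (fun a b => R a b \/ exists c d, R a c /\ K c d /\ R d b).
      split.
      * apply (cs_sub hE' _ _ (cs_union hE' _ _ hR (cs_comp hE' _ _ (cs_comp hE' _ _ hR HK) hR))).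
        intros a b [q|[c [d [q1 [q2 q3]]]]]; auto.
        right. exists d. split; auto. exists c; auto.
      * intros b _. destruct (Hc _ _ (HG (proj1_sig b) I)) as [h|[a [c [p [q r]]]]].
        { left. left. exists x0; auto. }
        { right; exists a, c. split; [left; exists x0; auto|]. split; auto. right; auto. }
  - intros [_ HEN]. split; [apply unb; auto|]. intros A HA.
    destruct (classic (exists y0 : {x|Y x}, True)) as [[y0 _]|Hne].
    + assert (HiA : ~ bounded E (iota A)) by (intro h; apply HA; exact (bE_to_S hE y0 h)).
      destruct (HEN _ HiA) as [F [HF Hcov]].
      exists (fun a b => F (proj1_sig a) (proj1_sig b)). split; [apply restr_in; auto|].
      intros b. destruct (Hcov (proj1_sig b)) as [a' [[a [Ha <-]] Hf]]. exists a; auto.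
    + exists (fun a b => True). split.
      * exists (fun x y => x = y); split; [apply (cs_diag hE)|].
        intros a; exfalso; apply Hne; eauto.
      * intros a; exfalso; apply Hne; eauto.
  - intros [_ HU]. split; [apply unb; auto|]. intros A B HA HB Hdis.
    destruct (Hdis (fun a b => a = b)) as [y0 _].
    { exists (fun x y => x = y); split; [apply (cs_diag hE)|].
      intros a b; split; intro e; [subst; auto|apply sig_inj; auto]. }
    apply (HU (iota A) (iota B)).
    + intro h; apply HA; exact (bE_to_S hE y0 h).
    + intro h; apply HB; exact (bE_to_S hE y0 h).
    + intros F HF.
      pose (H := fun x y => exists z, F x z /\ F y z).
      assert (HH : E H).
      { apply (cs_sub hE _ _ (cs_comp hE _ _ HF (cs_inv hE _ HF))). auto. }
      destruct (Hdis (fun a b => H (proj1_sig a) (proj1_sig b)) (@restr_in _ E Y H HH))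
        as [c0 [K [[G [HG HKG]] Hc]]].
      exists (proj1_sig c0), (fun x y => exists w, G x w /\ F w y). split.
      { apply (cs_comp hE); auto. }
      intros z [[x [[a [Ha <-]] Fa]] [x' [[b [Hb <-]] Fb]]].
      exists (proj1_sig a). split; [|exact Fa]. apply HKG. apply Hc. split.
      * exists a. split; auto. exists z; auto.
      * exists b. split; auto. exists z; auto.
Qed.
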